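(* Let $f:X\to Y$ be a continuous map between metric spaces, let $q:[a,b]\to X$ be a rectifiable path, and put $p=f\circ q$. Then: (1) there exists $\tau\in[a,b]$ such that $d(p(a),p(b))\le D^+_{q(\tau)}f\cdot\ell(q)$; (2) $\ell(p)\le \sup_{x\in\operatorname{Im} q}D_x^+f\cdot \ell(q)$.
   Context: The length of a path $q:[a,b]\to X$ in a metric space is $\ell(q)=\sup\sum_{i=0}^{n-1}d(q(t_i),q(t_{i+1}))$ over all partitions $a=t_0\le\dots\le t_n=b$; $q$ is rectifiable if $\ell(q)<\infty$. For a continuous map $f:X\to Y$ and a non-isolated point $x\in X$, $D_x^+f=\limsup_{z\to x,\,z\neq x}\frac{d(f(z),f(x))}{d(z,x)}\in[0,\infty]$ and $D_x^-f=\liminf_{z\to x,\,z\neq x}\frac{d(f(z),f(x))}{d(z,x)}\in[0,\infty]$. It is assumed that $X$ has no isolated points, and the convention $0\cdot\infty=0$ is used. *)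

(* Defs.v *)
From Stdlib Require Import Reals List Lra.
From Coquelicot Require Import Coquelicot.
Open Scope R_scope.

Definition no_isolated_points (X : Metric_Space) : Prop :=
  forall (x : Base X) (eps : R), 0 < eps ->
    exists z : Base X, z <> x /\ dist X z x < eps.

Definition mcontinuous (X Y : Metric_Space) (f : Base X -> Base Y) : Prop :=
  forall (x : Base X) (eps : R), 0 < eps ->
    exists delta : R, 0 < delta /\
      forall z : Base X, dist X z x < delta -> dist Y (f z) (f x) < eps.

(* A path q : [a,b] -> X (values outside [a,b] are irrelevant). *)
Definition is_path (X : Metric_Space) (q : R -> Base X) (a b : R) : Prop :=
  a <= b /\
  forall t : R, a <= t <= b -> forall eps : R, 0 < eps ->
    exists delta : R, 0 < delta /\
      forall s : R, a <= s <= b -> Rabs (s - t) < delta ->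
        dist X (q s) (q t) < eps.

Definition partition_sum (X : Metric_Space) (q : R -> Base X)
    (n : nat) (t : nat -> R) : R :=
  fold_right Rplus 0 (map (fun i => dist X (q (t i)) (q (t (S i)))) (seq 0 n)).

Definition is_partition (a b : R) (n : nat) (t : nat -> R) : Prop :=
  t 0%nat = a /\ t n = b /\ (forall i : nat, (i < n)%nat -> t i <= t (S i)).

Definition path_length (X : Metric_Space) (q : R -> Base X) (a b : R) : Rbar :=
  Lub_Rbar (fun s => exists (n : nat) (t : nat -> R),
                is_partition a b n t /\ s = partition_sum X q n t).

Definition rectifiable (X : Metric_Space) (q : R -> Base X) (a b : R) : Prop :=
  Rbar_lt (path_length X q a b) p_infty.

(* D^+_x f = limsup_{z -> x, z <> x} d(f z, f x) / d(z, x)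
           = inf_n sup { ratio : 0 < d(z,x) < 1/(n+1) }. *)
Definition Dplus (X Y : Metric_Space) (f : Base X -> Base Y) (x : Base X) : Rbar :=
  Inf_seq (fun n : nat =>
    Lub_Rbar (fun r => exists z : Base X,
      0 < dist X z x < / INR (S n) /\
      r = dist Y (f z) (f x) / dist X z x)).

Definition Rbar_sup (E : Rbar -> Prop) : Rbar :=
  Lub_Rbar (fun r => exists v, E v /\ Rbar_le (Finite r) v).

(* Coquelicot's Rbar_mult satisfies the convention 0 * oo = 0. *)
Lemma Rbar_mult_0_infty : Rbar_mult (Finite 0) p_infty = Finite 0.
Proof. unfold Rbar_mult, Rbar_mult'. destruct (Rle_dec 0 0) as [h|h].
  - destruct (Rle_lt_or_eq_dec 0 0 h) as [h'|h']; [exfalso; lra|reflexivity].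
  - exfalso; lra. Qed.

(* Main.v *)
Require Import Defs.
From Stdlib Require Import Reals List Lra Lia Classical ClassicalDescription.
From Coquelicot Require Import Coquelicot.
Open Scope R_scope.

Fixpoint sm (g : nat -> R) (n : nat) : R :=
  match n with O => 0 | S k => sm g k + g k end.

Lemma fold_sm_aux (g : nat -> R) (n k : nat) :
  fold_right Rplus 0 (map g (seq k n)) = sm (fun i => g (k + i)%nat) n.
Proof.
  revert k; induction n as [|n IH]; intro k; [reflexivity|].
  rewrite seq_S, map_app, fold_right_app; simpl.
  assert (H: forall l x, fold_right Rplus x l = x + fold_right Rplus 0 l).
  { induction l as [|y l IHl]; intro x; simpl; [ring| rewrite IHl; ring]. }
  rewrite H, IH. ring.
Qed.

Lemma psum_sm X q n t :
  partition_sum X q n t = sm (fun i => dist X (q (t i)) (q (t (S i)))) n.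
Proof. unfold partition_sum. rewrite fold_sm_aux. reflexivity. Qed.

Lemma sm_ext g h n : (forall i, (i < n)%nat -> g i = h i) -> sm g n = sm h n.
Proof. induction n; intro H; simpl; [reflexivity|].
  rewrite IHn by (intros; apply H; lia). rewrite H by lia. reflexivity. Qed.

Lemma sm_add g n1 n2 : sm g (n1 + n2) = sm g n1 + sm (fun j => g (n1 + j)%nat) n2.
Proof. induction n2; simpl. rewrite Nat.add_0_r; ring.
  rewrite Nat.add_succ_r; simpl; rewrite IHn2; ring. Qed.

Definition PS X q s t := fun r => exists (n : nat) (tt : nat -> R),
   is_partition s t n tt /\ r = partition_sum X q n tt.

Lemma pl_eq X q s t : path_length X q s t = Lub_Rbar (PS X q s t).
Proof. reflexivity. Qed.

Lemma lub_ge E r : E r -> Rbar_le (Finite r) (Lub_Rbar E).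
Proof. intro H. destruct (Lub_Rbar_correct E) as [H1 _]. apply H1, H. Qed.

Lemma lub_le E M : (forall r, E r -> r <= M) -> Rbar_le (Lub_Rbar E) (Finite M).
Proof. intro H. destruct (Lub_Rbar_correct E) as [_ H2]. apply H2.
  intros x Hx. apply H, Hx. Qed.

Lemma sandwich x y z : Rbar_le (Finite x) y -> Rbar_le y (Finite z) -> y = Finite (real y).
Proof. destruct y; simpl; tauto. Qed.

Lemma len_ge_dist X q s t : s <= t ->
  Rbar_le (Finite (dist X (q s) (q t))) (path_length X q s t).
Proof.
  intro Hst. apply lub_ge. exists 1%nat, (fun i => match i with O => s | _ => t end).
  split. split; [reflexivity| split; [reflexivity|]].
  intros i Hi. destruct i; [simpl; lra | lia].
  unfold partition_sum. simpl. ring.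
Qed.

Definition concat (n1 : nat) (t1 t2 : nat -> R) (i : nat) : R :=
  if Nat.leb i n1 then t1 i else t2 (i - n1)%nat.

Lemma concat_ok X q s m t n1 t1 n2 t2 :
  is_partition s m n1 t1 -> is_partition m t n2 t2 ->
  is_partition s t (n1 + n2) (concat n1 t1 t2) /\
  partition_sum X q (n1 + n2) (concat n1 t1 t2) =
    partition_sum X q n1 t1 + partition_sum X q n2 t2.
Proof.
  intros [A1 [B1 C1]] [A2 [B2 C2]]. unfold concat. split; [split; [|split]|].
  - simpl. exact A1.
  - destruct (Nat.leb_spec (n1+n2) n1).
    + assert (n2 = 0%nat) by lia. subst n2. rewrite Nat.add_0_r. congruence.
    + replace (n1 + n2 - n1)%nat with n2 by lia. exact B2.
  - intros i Hi. destruct (Nat.leb_spec i n1); destruct (Nat.leb_spec (S i) n1).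
    + apply C1; lia.
    + assert (i = n1) by lia. subst i. replace (S n1 - n1)%nat with 1%nat by lia.
      rewrite B1, <- A2. apply C2. lia.
    + lia.
    + replace (S i - n1)%nat with (S (i - n1)) by lia. apply C2; lia.
  - rewrite !psum_sm, sm_add. f_equal.
    + apply sm_ext. intros i Hi.
      destruct (Nat.leb_spec i n1); destruct (Nat.leb_spec (S i) n1); try lia. reflexivity.
    + apply sm_ext. intros j Hj.
      destruct (Nat.leb_spec (n1 + j) n1); destruct (Nat.leb_spec (S (n1 + j)) n1); try lia.
      * assert (j = 0%nat) by lia. subst j. rewrite Nat.add_0_r.
        replace (S n1 - n1)%nat with 1%nat by lia. rewrite B1, <- A2. reflexivity.
      * replace (n1 + j - n1)%nat with j by lia.
        replace (S (n1 + j) - n1)%nat with (S j) by lia. reflexivity.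
Qed.

Lemma len_split X q s m t : s <= m <= t -> Rbar_lt (path_length X q s t) p_infty ->
  exists L1 L2 L, path_length X q s m = Finite L1 /\ path_length X q m t = Finite L2 /\
    path_length X q s t = Finite L /\ L1 + L2 <= L.
Proof.
  intros [Hsm Hmt] Hfin.
  assert (Hst : s <= t) by lra.
  pose proof (len_ge_dist X q s t Hst) as G.
  destruct (path_length X q s t) as [L| |] eqn:EL; simpl in Hfin, G; try contradiction.
  assert (Hsum : forall r1 r2, PS X q s m r1 -> PS X q m t r2 -> r1 + r2 <= L).
  { intros r1 r2 [n1 [t1 [P1 ->]]] [n2 [t2 [P2 ->]]].
    destruct (concat_ok X q s m t n1 t1 n2 t2 P1 P2) as [P3 E3].
    rewrite <- E3. assert (Hr : Rbar_le (partition_sum X q (n1+n2) (concat n1 t1 t2)) (Finite L)).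
    { rewrite <- EL. apply lub_ge. exists (n1+n2)%nat, (concat n1 t1 t2). split; auto. }
    exact Hr. }
  assert (T2 : PS X q m t (dist X (q m) (q t))).
  { exists 1%nat, (fun i => match i with O => m | _ => t end).
    split. split; [reflexivity| split; [reflexivity|]].
    intros i Hi. destruct i; [simpl; lra | lia].
    unfold partition_sum. simpl. ring. }
  assert (U1 : Rbar_le (path_length X q s m) (Finite (L - dist X (q m) (q t)))).
  { apply lub_le. intros r Hr. specialize (Hsum r _ Hr T2). lra. }
  pose proof (len_ge_dist X q s m Hsm) as G1.
  pose proof (sandwich _ _ _ G1 U1) as E1. set (L1 := real (path_length X q s m)) in *.
  assert (U2 : Rbar_le (path_length X q m t) (Finite (L - L1))).
  { apply lub_le. intros r Hr.
    assert (H : Rbar_le (path_length X q s m) (Finite (L - r))).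
    { apply lub_le. intros r1 Hr1. specialize (Hsum r1 r Hr1 Hr). lra. }
    rewrite E1 in H. simpl in H. lra. }
  pose proof (len_ge_dist X q m t Hmt) as G2.
  pose proof (sandwich _ _ _ G2 U2) as E2.
  exists L1, (real (path_length X q m t)), L. split; [exact E1|split;[exact E2|split;[reflexivity|]]].
  rewrite E2 in U2. simpl in U2. lra.
Qed.
Definition bstep (G : R -> R -> Prop) (st : R * R) : R * R :=
  let s := fst st in let t := snd st in let m := (s + t) / 2 in
  if excluded_middle_informative (G s m) then (s, m) else (m, t).

Fixpoint bis G st n := match n with O => st | S k => bstep G (bis G st k) end.

Lemma half_small w d : 0 <= w -> 0 < d -> exists n, w * (/2)^n < d.
Proof.
  intros Hw Hd. destruct (pow_lt_1_zero (/2)) with (y := d / (w + 1)) as [N HN].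
  { rewrite Rabs_pos_eq; lra. }
  { apply Rdiv_lt_0_compat; lra. }
  exists N. specialize (HN N (le_n N)). rewrite Rabs_pos_eq in HN
    by (apply pow_le; lra).
  assert (Hp : 0 <= (/2)^N) by (apply pow_le; lra).
  apply Rmult_lt_compat_l with (r := w + 1) in HN; [|lra].
  replace ((w + 1) * (d / (w + 1))) with d in HN by (field; lra). nra.
Qed.

Lemma bisect (G : R -> R -> Prop) s0 t0 : s0 <= t0 -> G s0 t0 ->
  (forall s t, s0 <= s <= t -> t <= t0 -> G s t -> G s ((s+t)/2) \/ G ((s+t)/2) t) ->
  exists tau, s0 <= tau <= t0 /\ forall d, 0 < d -> exists s t,
    s0 <= s <= tau /\ tau <= t <= t0 /\ t - s < d /\ G s t.
Proof.
  intros H0 HG Hstep.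
  set (u n := bis G (s0, t0) n).
  assert (Inv : forall n, s0 <= fst (u n) <= snd (u n) /\ snd (u n) <= t0 /\
     snd (u n) - fst (u n) = (t0 - s0) * (/2)^n /\ G (fst (u n)) (snd (u n)) /\
     fst (u n) <= fst (u (S n)) /\ snd (u (S n)) <= snd (u n)).
  { induction n as [|n IH].
    - unfold u; simpl. unfold bstep; simpl.
      destruct (excluded_middle_informative _); simpl; repeat split; try lra; auto.
    - destruct IH as [I1 [I2 [I3 [I4 [I5 I6]]]]].
      assert (E : u (S n) = bstep G (u n)) by reflexivity.
      assert (K : s0 <= fst (u (S n)) <= snd (u (S n)) /\ snd (u (S n)) <= t0 /\
        snd (u (S n)) - fst (u (S n)) = (t0 - s0) * (/2)^(S n) /\ G (fst (u (S n))) (snd (u (S n)))).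
      { rewrite E. unfold bstep. destruct (excluded_middle_informative _) as [g|g]; cbn [fst snd].
        - repeat split; try lra; auto. cbn [pow]. replace ((t0 - s0) * (/2 * (/2)^n)) with ((t0-s0)*(/2)^n / 2) by field. rewrite <- I3. field.
        - repeat split; try lra.
          + cbn [pow]. replace ((t0 - s0) * (/2 * (/2)^n)) with ((t0-s0)*(/2)^n / 2) by field. rewrite <- I3. field.
          + destruct (Hstep _ _ (conj (proj1 I1) (proj2 I1)) I2 I4); tauto. }
      destruct K as [K1 [K2 [K3 K4]]].
      assert (E2 : u (S (S n)) = bstep G (u (S n))) by reflexivity.
      rewrite E2. unfold bstep. destruct (excluded_middle_informative _); cbn [fst snd];
        repeat split; try lra; auto. }
  assert (Mono : forall n k, fst (u n) <= fst (u (n + k)%nat) /\ snd (u (n + k)%nat) <= snd (u n)).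
  { intros n k. induction k. rewrite Nat.add_0_r; lra.
    rewrite Nat.add_succ_r. destruct (Inv (n + k)%nat) as [_ [_ [_ [_ [A B]]]]]. lra. }
  assert (Cross : forall n m, fst (u n) <= snd (u m)).
  { intros n m. destruct (Mono n m) as [A _]. destruct (Mono m n) as [_ B].
    rewrite Nat.add_comm in B. destruct (Inv (n + m)%nat) as [[_ C] _]. lra. }
  set (E := fun x => exists n, x = fst (u n)).
  destruct (completeness E) as [tau [Hub Hlub]].
  { exists t0. intros x [n ->]. destruct (Inv n) as [A [B _]]. lra. }
  { exists (fst (u 0%nat)). exists 0%nat. reflexivity. }
  assert (T1 : forall n, fst (u n) <= tau) by (intro n; apply Hub; exists n; reflexivity).
  assert (T2 : forall m, tau <= snd (u m)).
  { intro m. apply Hlub. intros x [n ->]. apply Cross. }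
  exists tau. split.
  { split. specialize (T1 0%nat). destruct (Inv 0%nat) as [[A _] _]. lra.
    specialize (T2 0%nat). destruct (Inv 0%nat) as [_ [B _]]. lra. }
  intros d Hd. destruct (half_small (t0 - s0) d) as [n Hn]; [lra|lra|].
  exists (fst (u n)), (snd (u n)). destruct (Inv n) as [A [B [C [D _]]]].
  specialize (T1 n). specialize (T2 n). repeat split; try lra; auto.
Qed.

Lemma len_fin X q a b s t : a <= s -> s <= t -> t <= b ->
  Rbar_lt (path_length X q a b) p_infty ->
  path_length X q s t = Finite (real (path_length X q s t)).
Proof.
  intros H1 H2 H3 H. destruct (len_split X q a s b) as [L1 [L2 [L [E1 [E2 [E3 _]]]]]]; [lra|auto|].
  destruct (len_split X q s t b) as [M1 [M2 [M [F1 _]]]]; [lra| rewrite E2; simpl; auto|].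
  rewrite F1. reflexivity.
Qed.

Lemma lr_dist X q a b s t : a <= s -> s <= t -> t <= b ->
  Rbar_lt (path_length X q a b) p_infty ->
  dist X (q s) (q t) <= real (path_length X q s t).
Proof.
  intros H1 H2 H3 H. pose proof (len_ge_dist X q s t H2) as G.
  rewrite (len_fin X q a b s t H1 H2 H3 H) in G. exact G.
Qed.

Lemma lr_split X q a b s m t : a <= s -> s <= m -> m <= t -> t <= b ->
  Rbar_lt (path_length X q a b) p_infty ->
  real (path_length X q s m) + real (path_length X q m t) <= real (path_length X q s t).
Proof.
  intros H1 H2 H3 H4 H.
  destruct (len_split X q s m t) as [L1 [L2 [L [E1 [E2 [E3 E4]]]]]]; [lra| |].
  { rewrite (len_fin X q a b s t); simpl; auto; lra. }
  rewrite E1, E2, E3. exact E4.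
Qed.

Lemma Rbar_mult_pinf L : 0 < L -> Rbar_mult p_infty (Finite L) = p_infty.
Proof. intro H. unfold Rbar_mult, Rbar_mult'. destruct (Rle_dec 0 L) as [h|h]; [|lra].
  destruct (Rle_lt_or_eq_dec 0 L h); [reflexivity|lra]. Qed.

Lemma inf_const c : Inf_seq (fun _ : nat => Finite c) = Finite c.
Proof. apply is_inf_seq_unique. intro eps. destruct eps as [e He]. simpl.
  split; [intro; lra| exists 0%nat; lra]. Qed.

Lemma Dplus_ge X Y f x c :
  (forall k : nat, exists z, 0 < dist X z x < / INR (S k) /\
      c <= dist Y (f z) (f x) / dist X z x) ->
  Rbar_le (Finite c) (Dplus X Y f x).
Proof.
  intro H. unfold Dplus. rewrite <- inf_const. apply Inf_seq_le. intro n.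
  destruct (H n) as [z [Hz Hc]].
  apply Rbar_le_trans with (Finite (dist Y (f z) (f x) / dist X z x)); [exact Hc|].
  apply lub_ge. exists z. split; [exact Hz|reflexivity].
Qed.

Lemma le_div c A d : 0 < A -> c * A <= d -> c <= d / A.
Proof. intros HA H. unfold Rdiv. apply Rmult_le_reg_r with A; auto.
  rewrite Rmult_assoc, Rinv_l by lra. lra. Qed.

Lemma dist_pos0 (X : Metric_Space) x y : 0 <= dist X x y.
Proof. pose proof (dist_pos X x y). lra. Qed.

Lemma dist0 (X : Metric_Space) x y : dist X x y <= 0 -> x = y.
Proof. intro H. apply dist_refl. pose proof (dist_pos X x y). lra. Qed.

Lemma Dplus_nonneg X Y f (HX : no_isolated_points X) x : Rbar_le (Finite 0) (Dplus X Y f x).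
Proof.
  apply Dplus_ge. intro k.
  assert (He : 0 < / INR (S k)) by (apply Rinv_0_lt_compat, lt_0_INR; lia).
  destruct (HX x _ He) as [z [Hz Hd]]. exists z.
  assert (Hp : 0 < dist X z x).
  { destruct (Rle_lt_dec (dist X z x) 0) as [h|h]; [|exact h]. exfalso. apply Hz, dist0, h. }
  split; [lra|]. apply le_div; [exact Hp|]. rewrite Rmult_0_l. apply dist_pos0.
Qed.

Lemma mult_ge D c L : 0 <= c -> 0 < L -> Rbar_le (Finite c) D ->
  Rbar_le (Finite (c * L)) (Rbar_mult D (Finite L)).
Proof.
  intros Hc HL HD. destruct D as [d| |]; simpl in HD.
  - simpl. apply Rmult_le_compat_r; lra.
  - rewrite Rbar_mult_pinf by exact HL. simpl. trivial.
  - contradiction.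
Qed.

Lemma mvt X Y (HX : no_isolated_points X) f q a b (Hq : is_path X q a b)
  (Hr : rectifiable X q a b) s0 t0 : a <= s0 -> s0 <= t0 -> t0 <= b ->
  exists tau, s0 <= tau <= t0 /\
    Rbar_le (Finite (dist Y (f (q s0)) (f (q t0))))
            (Rbar_mult (Dplus X Y f (q tau)) (path_length X q s0 t0)).
Proof.
  intros Ha Hst Hb. unfold rectifiable in Hr.
  set (lr := fun s t => real (path_length X q s t)).
  assert (Fd : forall s t, s0 <= s -> s <= t -> t <= t0 -> dist X (q s) (q t) <= lr s t).
  { intros s t H1 H2 H3. apply (lr_dist X q a b); auto; lra. }
  assert (Fs : forall s m t, s0 <= s -> s <= m -> m <= t -> t <= t0 -> lr s m + lr m t <= lr s t).
  { intros s m t H1 H2 H3 H4. apply (lr_split X q a b); auto; lra. }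
  rewrite (len_fin X q a b s0 t0 Ha Hst Hb Hr). fold (lr s0 t0).
  set (L := lr s0 t0). set (dY := fun s t => dist Y (f (q s)) (f (q t))).
  fold (dY s0 t0). set (Del := dY s0 t0).
  assert (HdX := Fd s0 t0 (Rle_refl _) Hst (Rle_refl _)). fold L in HdX.
  assert (Hdel : 0 <= Del) by apply dist_pos0.
  destruct (Rle_lt_dec L 0) as [HL|HL].
  { assert (E : q s0 = q t0) by (apply dist0; lra).
    exists s0. split; [lra|]. unfold Del, dY. rewrite E.
    replace (dist Y (f (q t0)) (f (q t0))) with 0 by (symmetry; apply dist_refl; reflexivity).
    replace L with 0 by (pose proof (dist_pos0 X (q s0) (q t0)); lra).
    rewrite Rbar_mult_0_r. simpl. lra. }
  set (c := Del / L).
  assert (HcL : c * L = Del) by (unfold c; field; lra).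
  destruct (Rle_lt_dec Del 0) as [HD|HD].
  { exists s0. split; [lra|]. replace Del with (0 * L) by lra.
    apply mult_ge; [lra|exact HL|apply Dplus_nonneg; exact HX]. }
  assert (Hc : 0 < c) by (unfold c; apply Rdiv_lt_0_compat; lra).
  assert (Z : forall s t, s0 <= s -> s <= t -> t <= t0 -> lr s t <= 0 -> dY s t = 0).
  { intros s t H1 H2 H3 H4. assert (E : q s = q t).
    { apply dist0. pose proof (Fd s t H1 H2 H3). lra. }
    unfold dY. rewrite E. apply dist_refl. reflexivity. }
  assert (Tri : forall s m t, dY s t <= dY s m + dY m t).
  { intros. unfold dY. apply dist_tri. }
  assert (Lnn : forall s t, s0 <= s -> s <= t -> t <= t0 -> 0 <= lr s t).
  { intros s t H1 H2 H3. pose proof (Fd s t H1 H2 H3). pose proof (dist_pos0 X (q s) (q t)). lra. }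
  set (G := fun s t => c * lr s t <= dY s t /\ 0 < lr s t).
  destruct (bisect G s0 t0) as [tau [Htau Hbis]].
  - exact Hst.
  - unfold G; cbv beta. change (lr s0 t0) with L. change (dY s0 t0) with Del. split; lra.
  - intros s t [H1 H2] H3 [G1 G2]. set (m := (s + t) / 2).
    assert (Hm1 : s <= m) by (unfold m; lra). assert (Hm2 : m <= t) by (unfold m; lra).
    apply NNPP. intro Hn. apply not_or_and in Hn. destruct Hn as [N1 N2].
    pose proof (Fs s m t H1 Hm1 Hm2 H3) as S1.
    pose proof (Lnn s m H1 Hm1 ltac:(lra)) as P1.
    pose proof (Lnn m t ltac:(lra) Hm2 H3) as P2.
    assert (A1 : dY s m <= c * lr s m /\ (dY s m < c * lr s m \/ lr s m = 0)).
    { destruct (Rle_lt_dec (lr s m) 0) as [h|h].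
      - rewrite (Z s m H1 Hm1 ltac:(lra) h). split; [nra| right; lra].
      - destruct (Rle_lt_dec (c * lr s m) (dY s m)) as [h'|h']; [exfalso; apply N1; split; auto|].
        split; lra. }
    assert (A2 : dY m t <= c * lr m t /\ (dY m t < c * lr m t \/ lr m t = 0)).
    { destruct (Rle_lt_dec (lr m t) 0) as [h|h].
      - rewrite (Z m t ltac:(lra) Hm2 H3 h). split; [nra| right; lra].
      - destruct (Rle_lt_dec (c * lr m t) (dY m t)) as [h'|h']; [exfalso; apply N2; split; auto|].
        split; lra. }
    pose proof (Tri s m t) as T.
    assert (M : c * (lr s m + lr m t) <= c * lr s t) by (apply Rmult_le_compat_l; lra).
    destruct A1 as [A1 [A1'|A1']]; destruct A2 as [A2 [A2'|A2']]; try nra.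
  - exists tau. split; [exact Htau|].
    replace Del with (c * L) by exact HcL. apply mult_ge; [lra|exact HL|].
    apply Dplus_ge. intro k.
    assert (He : 0 < / INR (S k)) by (apply Rinv_0_lt_compat, lt_0_INR; lia).
    destruct Hq as [_ Hcont].
    destruct (Hcont tau ltac:(lra) _ He) as [del [Hdel0 Hdl]].
    destruct (Hbis del Hdel0) as [s [t [[H1 H2] [[H3 H4] [H5 [G1 G2]]]]]].
    set (A := dist X (q s) (q tau)). set (B := dist X (q t) (q tau)).
    assert (HA : A < / INR (S k)).
    { apply Hdl; [lra|]. rewrite Rabs_left1; lra. }
    assert (HB : B < / INR (S k)).
    { apply Hdl; [lra|]. rewrite Rabs_right; lra. }
    set (d1 := dist Y (f (q s)) (f (q tau))). set (d2 := dist Y (f (q t)) (f (q tau))).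
    assert (K : (0 < A /\ c * A <= d1) \/ (0 < B /\ c * B <= d2)).
    { apply NNPP. intro Hn. apply not_or_and in Hn. destruct Hn as [N1 N2].
      pose proof (Fs s tau t H1 H2 H3 H4) as S1.
      assert (FA : A <= lr s tau) by (apply Fd; lra).
      assert (FB : B <= lr tau t) by (unfold B; rewrite dist_sym; apply Fd; lra).
      assert (TT : dY s t <= d1 + d2).
      { unfold dY, d1, d2. rewrite (dist_sym Y (f (q t))). apply dist_tri. }
      assert (A1 : d1 <= c * A /\ (d1 < c * A \/ d1 = 0 /\ A = 0)).
      { destruct (Rle_lt_dec A 0) as [h|h].
        - assert (E : q s = q tau) by (apply dist0; exact h).
          assert (E1 : d1 = 0) by (unfold d1; rewrite E; apply dist_refl; reflexivity).
          pose proof (dist_pos0 X (q s) (q tau)). fold A in H. split; [nra| right; lra].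
        - destruct (Rle_lt_dec (c * A) d1) as [h'|h']; [exfalso; apply N1; split; auto|].
          split; lra. }
      assert (A2 : d2 <= c * B /\ (d2 < c * B \/ d2 = 0 /\ B = 0)).
      { destruct (Rle_lt_dec B 0) as [h|h].
        - assert (E : q t = q tau) by (apply dist0; exact h).
          assert (E1 : d2 = 0) by (unfold d2; rewrite E; apply dist_refl; reflexivity).
          pose proof (dist_pos0 X (q t) (q tau)). fold B in H. split; [nra| right; lra].
        - destruct (Rle_lt_dec (c * B) d2) as [h'|h']; [exfalso; apply N2; split; auto|].
          split; lra. }
      assert (M : c * (A + B) <= c * lr s t) by (apply Rmult_le_compat_l; lra).
      destruct A1 as [A1 [A1'|[A1' A1'']]]; destruct A2 as [A2 [A2'|[A2' A2'']]]; try nra. }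
    destruct K as [[K1 K2]|[K1 K2]].
    + exists (q s). split; [split; [exact K1|exact HA]|]. apply le_div; auto.
    + exists (q t). split; [split; [exact K1|exact HB]|]. apply le_div; auto.
Qed.

Lemma sup_ge (E : Rbar -> Prop) v : E v -> Rbar_le v (Rbar_sup E).
Proof.
  intro H. unfold Rbar_sup. destruct v as [r| |].
  - apply lub_ge. exists (Finite r). split; [exact H| simpl; lra].
  - assert (All : forall r, Rbar_le (Finite r) (Lub_Rbar (fun r => exists v, E v /\ Rbar_le (Finite r) v))).
    { intro r. apply lub_ge. exists p_infty. split; [exact H| simpl; trivial]. }
    destruct (Lub_Rbar _) as [l| |]; simpl; trivial.
    + specialize (All (l + 1)). simpl in All. lra.
    + specialize (All 0). simpl in All. exact All.
  - simpl. trivial.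
Qed.

Lemma part_bounds a b n t : is_partition a b n t -> forall i, (i <= n)%nat -> a <= t i <= b.
Proof.
  intros [A [B C]] i Hi. split.
  - induction i. rewrite A; lra. apply Rle_trans with (t i). apply IHi; lia. apply C; lia.
  - assert (K : forall k, (k <= n)%nat -> t (n - k)%nat <= b).
    { induction k; intro Hk. rewrite Nat.sub_0_r, B; lra.
      apply Rle_trans with (t (n - k)%nat); [|apply IHk; lia].
      replace (n - k)%nat with (S (n - S k)) by lia. apply C; lia. }
    replace i with (n - (n - i))%nat by lia. apply K; lia.
Qed.

Lemma sm_zero g n : (forall i, (i < n)%nat -> g i = 0) -> sm g n = 0.
Proof. intro H. rewrite (sm_ext g (fun _ => 0)) by exact H. induction n; simpl; [reflexivity|].
  rewrite IHn by (intros; apply H; lia). ring. Qed.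

Theorem theorem2 (X Y : Metric_Space) (HX : no_isolated_points X)
  (f : Base X -> Base Y) (Hf : mcontinuous X Y f)
  (q : R -> Base X) (a b : R) (Hq : is_path X q a b)
  (Hrect : rectifiable X q a b) :
  let p := fun t : R => f (q t) in
  (exists tau : R, a <= tau <= b /\
     Rbar_le (Finite (dist Y (p a) (p b)))
             (Rbar_mult (Dplus X Y f (q tau)) (path_length X q a b))) /\
  Rbar_le (path_length Y p a b)
          (Rbar_mult (Rbar_sup (fun v => exists t : R, a <= t <= b /\ v = Dplus X Y f (q t)))
                     (path_length X q a b)).
Proof.
  intro p. pose proof (proj1 Hq) as Hab. split.
  { destruct (mvt X Y HX f q a b Hq Hrect a b (Rle_refl _) Hab (Rle_refl _)) as [tau [H1 H2]].
    exists tau. split; auto. }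
  unfold rectifiable in Hrect.
  set (lr := fun s t => real (path_length X q s t)).
  rewrite (len_fin X q a b a b (Rle_refl _) Hab (Rle_refl _) Hrect). fold (lr a b).
  set (L := lr a b).
  set (Sup := Rbar_sup _).
  assert (HS0 : Rbar_le (Dplus X Y f (q a)) Sup).
  { apply sup_ge. exists a. split; [lra|reflexivity]. }
  pose proof (Dplus_nonneg X Y f HX (q a)) as HD0.
  assert (HL0 : 0 <= L).
  { pose proof (lr_dist X q a b a b (Rle_refl _) Hab (Rle_refl _) Hrect). pose proof (dist_pos0 X (q a) (q b)).
    unfold L, lr. lra. }
  destruct (Rle_lt_dec L 0) as [HL|HL].
  { replace L with 0 by lra. rewrite Rbar_mult_0_r.
    assert (Cst : forall u, a <= u <= b -> q u = q a).
    { intros u Hu. symmetry. apply dist0.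
      pose proof (lr_dist X q a b a u (Rle_refl _) (proj1 Hu) (proj2 Hu) Hrect).
      pose proof (lr_split X q a b a u b (Rle_refl _) (proj1 Hu) (proj2 Hu) (Rle_refl _) Hrect).
      pose proof (lr_dist X q a b u b (proj1 Hu) (proj2 Hu) (Rle_refl _) Hrect).
      pose proof (dist_pos0 X (q u) (q b)). unfold L, lr in HL. lra. }
    apply lub_le. intros r [n [t [Pt ->]]]. rewrite psum_sm, sm_zero; [lra|].
    intros i Hi. unfold p. rewrite (Cst (t i)), (Cst (t (S i))).
    - apply dist_refl. reflexivity.
    - apply (part_bounds a b n t Pt); lia.
    - apply (part_bounds a b n t Pt); lia. }
  destruct Sup as [Sv| |] eqn:ES.
  2:{ rewrite Rbar_mult_pinf by exact HL. destruct (path_length Y p a b); simpl; trivial. }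
  2:{ exfalso. pose proof (Rbar_le_trans _ _ _ HD0 HS0). simpl in H. exact H. }
  assert (HSn : 0 <= Sv) by (pose proof (Rbar_le_trans _ _ _ HD0 HS0) as H; simpl in H; exact H).
  simpl. apply lub_le. intros r [n [t [Pt ->]]]. rewrite psum_sm.
  set (g := fun i => dist Y (p (t i)) (p (t (S i)))).
  assert (K : forall k, (k <= n)%nat -> sm g k <= Sv * lr a (t k)).
  { induction k; intro Hk.
    - simpl. destruct Pt as [A _]. rewrite A.
      assert (0 <= lr a a).
      { pose proof (lr_dist X q a b a a (Rle_refl _) (Rle_refl _) Hab Hrect). pose proof (dist_pos0 X (q a) (q a)).
        unfold lr. lra. }
      nra.
    - simpl. specialize (IHk ltac:(lia)).
      pose proof (part_bounds a b n t Pt k ltac:(lia)) as B1.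
      pose proof (part_bounds a b n t Pt (S k) ltac:(lia)) as B2.
      assert (Mk : t k <= t (S k)) by (destruct Pt as [_ [_ C]]; apply C; lia).
      pose proof (lr_split X q a b a (t k) (t (S k)) (Rle_refl _) (proj1 B1) Mk (proj2 B2) Hrect) as Sp.
      fold lr in Sp.
      destruct (mvt X Y HX f q a b Hq Hrect (t k) (t (S k)) (proj1 B1) Mk (proj2 B2)) as [tau [Ht Hm]].
      rewrite (len_fin X q a b (t k) (t (S k)) (proj1 B1) Mk (proj2 B2) Hrect) in Hm.
      fold (lr (t k) (t (S k))) in Hm.
      assert (HDt : Rbar_le (Dplus X Y f (q tau)) (Finite Sv)).
      { rewrite <- ES. apply sup_ge. exists tau. split; [lra|reflexivity]. }
      pose proof (Dplus_nonneg X Y f HX (q tau)) as HDt0.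
      pose proof (sandwich _ _ _ HDt0 HDt) as Es. pose proof HDt as HDt'.
      rewrite Es in Hm, HDt'. simpl in Hm, HDt'. pose proof HDt0 as HDt0'. rewrite Es in HDt0'. simpl in HDt0'.
      assert (0 <= lr (t k) (t (S k))).
      { pose proof (lr_dist X q a b (t k) (t (S k)) (proj1 B1) Mk (proj2 B2) Hrect).
        pose proof (dist_pos0 X (q (t k)) (q (t (S k)))). unfold lr. lra. }
      assert (g k <= Sv * lr (t k) (t (S k))) by (unfold g, p; set (DD := real (Dplus X Y f (q tau))) in *; set (ll := lr (t k) (t (S k))) in *; nra).
      assert (Sv * (lr a (t k) + lr (t k) (t (S k))) <= Sv * lr a (t (S k))) by (apply Rmult_le_compat_l; [lra| exact Sp]). lra. }
  specialize (K n (le_n n)). destruct Pt as [_ [B _]]. rewrite B in K. exact K.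
Qed.
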